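(* Let $T$ be a rooted binary ultrametric caterpillar tree on $X$ with $|X|=n\geq 3$ and strictly positive edge lengths, let $X'\subset X$, and let $\widetilde T=T_{\widetilde X}$ with $\widetilde X=X\setminus X'$. Then for all $x_i,x_j\in\widetilde X$, $FP_T(x_i)\geq FP_T(x_j)$ implies $FP_{\widetilde T}(x_i)\geq FP_{\widetilde T}(x_j)$.
   Context: A rooted binary phylogenetic $X$-tree ($X$ finite) is a rooted tree whose root $\rho$ has in-degree 0 and out-degree 2, all edges directed away from $\rho$, all other interior vertices have in-degree 1 and out-degree 2, and whose leaves are bijectively labelled by $X$. Every edge $e$ has a strictly positive length $\lambda_e$. The tree is ultrametric if the sum of edge lengths on the path from the root to every leaf is the same. A cherry is a pair of leaves with the same parent; a caterpillar tree has exactly one cherry. The Fair Proportion index of $x\in X$ is $FP_T(x)=\sum_{e\in P(T;\rho,x)}\lambda_e/D_e$, where $P(T;\rho,x)$ is the path from $\rho$ to $x$ and $D_e$ is the number of leaves descended from $e$. For $Y\subseteq X$, the induced subtree $T_Y$ is obtained from the minimal subtree of $T$ connecting $Y$ by suppressing all non-root vertices of in- and out-degree 1, adding the lengths of merged edges; if the root then has out-degree 1, it and its incident edge are deleted. *)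

(* Defs.v *)
From mathcomp Require Import all_boot all_order all_algebra.
Set Implicit Arguments. Unset Strict Implicit. Unset Printing Implicit Defensive.
Import Order.TTheory GRing.Theory Num.Theory.
Local Open Scope ring_scope.

(* A rooted binary tree with leaves labelled in X and edge lengths in R.
   [Nd a l b r] is an interior vertex with two outgoing edges: one of length
   [a] to the subtree [l] and one of length [b] to the subtree [r]. *)
Inductive btree (R X : Type) :=
| Lf of X
| Nd of R & btree R X & R & btree R X.
Arguments Lf {R X}.
Arguments Nd {R X}.

Section Trees.
Variables (R : realFieldType) (X : finType).
Implicit Types (t l r : btree R X) (x : X).

Fixpoint leaves t : seq X :=
  match t with Lf y => [:: y] | Nd _ l _ r => leaves l ++ leaves r end.

Definition phylo_X_tree t : Prop := perm_eq (leaves t) (enum X).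

Fixpoint pos_lengths t : bool :=
  match t with
  | Lf _ => true
  | Nd a l b r => [&& 0 < a, 0 < b, pos_lengths l & pos_lengths r]
  end.

Fixpoint root_dist t x : R :=
  match t with
  | Lf _ => 0
  | Nd a l b r =>
      if x \in leaves l then a + root_dist l x
      else if x \in leaves r then b + root_dist r x else 0
  end.

Definition ultrametric t : Prop :=
  exists c : R, forall x, x \in leaves t -> root_dist t x = c.

Fixpoint cherries t : nat :=
  match t with
  | Lf _ => 0
  | Nd _ (Lf _) _ (Lf _) => 1
  | Nd _ l _ r => cherries l + cherries r
  end.

Definition caterpillar t : Prop := cherries t = 1%N.

(* Fair Proportion index: sum over edges e on the root-to-x path of
   lambda_e / D_e, D_e = number of leaves below e. *)
Fixpoint FP t x : R :=
  match t with
  | Lf _ => 0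
  | Nd a l b r =>
      if x \in leaves l then a / (size (leaves l))%:R + FP l x
      else if x \in leaves r then b / (size (leaves r))%:R + FP r x else 0
  end.

(* Restriction to Y: returns None if no leaf of Y is below, otherwise
   Some (e, t') where t' is the suppressed restricted subtree and e is the
   length of the path segment that got merged (through suppressed
   vertices of in/out-degree 1) and must be added to the parent edge. *)
Fixpoint restrict (Y : {set X}) t : option (R * btree R X) :=
  match t with
  | Lf y => if y \in Y then Some (0, Lf y) else None
  | Nd a l b r =>
      match restrict Y l, restrict Y r with
      | Some (el, l'), Some (er, r') => Some (0, Nd (a + el) l' (b + er) r')
      | Some (el, l'), None => Some (a + el, l')
      | None, Some (er, r') => Some (b + er, r')
      | None, None => None
      end
  end.

(* Induced subtree T_Y: the root, if it ends up with out-degree 1, is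
   deleted together with its incident (merged) edge, i.e. the pending
   length is discarded. None iff Y contains no leaf of t. *)
Definition induced (Y : {set X}) t : option (btree R X) :=
  omap snd (restrict Y t).

End Trees.

(* Main.v *)
Require Import Defs.
From mathcomp Require Import all_boot all_order all_algebra.
Import Order.TTheory GRing.Theory Num.Theory.
Local Open Scope ring_scope.

Module Aux.
Set Implicit Arguments. Unset Strict Implicit.


Section H.
Variables (R : realFieldType) (X : finType).
Implicit Types (t l r : btree R X) (x : X).

Lemma div_le (u : R) n : 0 <= u -> (0 < n)%N -> u / n%:R <= u.
Proof.
move=> u0 n0; rewrite ler_pdivrMr ?ltr0n //.
by rewrite ler_peMr // ler1n.
Qed.

Lemma div_lt (u : R) n : 0 < u -> (1 < n)%N -> u / n%:R < u.
Proof.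
move=> u0 n1; rewrite ltr_pdivrMr ?ltr0n ?(ltn_trans _ n1) //.
by rewrite ltr_pMr // ltr1n.
Qed.

Lemma size_leaves_gt0 t : (0 < size (leaves t))%N.
Proof. by elim: t => //= a l IHl b r IHr; rewrite size_cat addn_gt0 IHl. Qed.

Lemma cherries_gen t : (if t is Lf _ then true else (1 <= cherries t)%N).
Proof.
elim: t => // a l IHl b r IHr.
case: l IHl => [z|a1 l1 b1 r1] IHl; case: r IHr => [w|a2 l2 b2 r2] IHr //=.
- by rewrite addn0.
- by rewrite (leq_trans IHl) // leq_addr.
Qed.

Lemma cherries_Nd a l b r : (1 <= cherries (Nd a l b r))%N.
Proof. exact: (cherries_gen (Nd a l b r)). Qed.

Lemma restrict_leaves (Y : {set X}) t :
  match restrict Y t with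
  | None => forall x, x \in Y -> x \notin leaves t
  | Some (e, t') => forall x, (x \in leaves t') = (x \in Y) && (x \in leaves t)
  end.
Proof.
elim: t => [y|a l IHl b r IHr] /=.
  case: ifP => Hy x; rewrite inE.
    by case: eqP => [->|]; rewrite ?Hy ?andbF.
  by move=> xY; apply/eqP => E; rewrite -E xY in Hy.
move: IHl IHr.
case: (restrict Y l) => [[el l']|]; case: (restrict Y r) => [[er r']|] //= Hl Hr x;
  rewrite ?mem_cat ?Hl ?Hr.
- by rewrite andb_orr.
- by case xY: (x \in Y) => //=; rewrite (negbTE (Hr x xY)) orbF.
- by case xY: (x \in Y) => //=; rewrite (negbTE (Hl x xY)).
- by move=> xY; rewrite (negbTE (Hl x xY)) (negbTE (Hr x xY)).
Qed.

Lemma restrict_pos (Y : {set X}) t e t' :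
  pos_lengths t -> restrict Y t = Some (e, t') -> 0 <= e /\ pos_lengths t'.
Proof.
elim: t e t' => [y|a l IHl b r IHr] e t' /=.
  by case: ifP => // _ _ [<- <-].
case/and4P=> a0 b0 pl pr.
case El: (restrict Y l) => [[el l']|]; case Er: (restrict Y r) => [[er r']|] // [<- <-].
- have [el0 pl'] := IHl _ _ pl El; have [er0 pr'] := IHr _ _ pr Er.
  by split => //=; rewrite pl' pr' !ltr_wpDr.
- have [el0 pl'] := IHl _ _ pl El; split => //.
  by rewrite addr_ge0 // ltW.
- have [er0 pr'] := IHr _ _ pr Er; split => //.
  by rewrite addr_ge0 // ltW.
Qed.

Lemma restrict_dist (Y : {set X}) t e t' x :
  restrict Y t = Some (e, t') -> x \in Y -> x \in leaves t ->
  e + root_dist t' x = root_dist t x.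
Proof.
elim: t e t' => [y|a l IHl b r IHr] e t' /=.
  by case: ifP => // _ [<- <-] _ _ /=; rewrite addr0.
move=> + xY; have := restrict_leaves Y l; have := restrict_leaves Y r.
case El: (restrict Y l) => [[el l']|]; case Er: (restrict Y r) => [[er r']|] //= Hr Hl [<- <-].
- rewrite add0r /= Hl Hr xY /= mem_cat.
  case: ifP => xl /=; first by rewrite -(IHl _ _ El xY xl) addrA.
  by move=> xr; rewrite xr -(IHr _ _ Er xY xr) addrA.
- rewrite mem_cat (negbTE (Hr x xY)) orbF => xl.
  by rewrite xl -(IHl _ _ El xY xl) addrA.
- rewrite mem_cat (negbTE (Hl x xY)) /= => xr.
  by rewrite xr -(IHr _ _ Er xY xr) addrA.
Qed.

Lemma FP_le_dist t x : pos_lengths t -> FP t x <= root_dist t x.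
Proof.
elim: t => [y|a l IHl b r IHr] //= /and4P[a0 b0 pl pr].
case: ifP => _; first by apply: lerD; [rewrite div_le // ?ltW // size_leaves_gt0|exact: IHl].
case: ifP => _ //; by apply: lerD; [rewrite div_le // ?ltW // size_leaves_gt0|exact: IHr].
Qed.

End H.


Section M.
Variables (R : realFieldType) (X : finType).
Implicit Types (t l r : btree R X) (x : X).

Definition Good (Y : {set X}) t := forall e Tt xi xj, restrict Y t = Some (e, Tt) ->
  xi \in Y -> xj \in Y -> xi \in leaves t -> xj \in leaves t ->
  FP t xj <= FP t xi -> FP Tt xj <= FP Tt xi.

Lemma FP_left a z b r x : FP (Nd a (Lf z) b r) x =
  if x == z then a else if x \in leaves r then b / (size (leaves r))%:R + FP r x else 0.
Proof. by rewrite /= inE; case: eqP => // _; rewrite divr1 addr0. Qed.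

Lemma FP_right a z b l x : FP (Nd a l b (Lf z)) x =
  if x \in leaves l then a / (size (leaves l))%:R + FP l x else if x == z then b else 0.
Proof. by rewrite /= inE; case: ifP => // _; case: eqP => // _; rewrite divr1 addr0. Qed.

Lemma step_left Y a z b r : Good Y r -> (1 < size (leaves r))%N ->
  uniq (z :: leaves r) -> pos_lengths (Nd a (Lf z) b r) ->
  ultrametric (Nd a (Lf z) b r) -> Good Y (Nd a (Lf z) b r).
Proof.
move=> IH r2 uq /and4P[a0 b0 _ pr] [c Hc] e Tt xi xj.
have zr : z \notin leaves r by move: uq; rewrite cons_uniq => /andP[].
have Ha : a = c by rewrite -(Hc z) /= ?inE ?eqxx ?addr0.
have nz x : x \in leaves r -> (x == z) = false.
  by move=> xr; apply/eqP => E; rewrite -E xr in zr.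
have Hd x : x \in leaves r -> b + root_dist r x = c.
  move=> xr; rewrite -(Hc x); last by rewrite /= inE xr orbT.
  by rewrite /= inE nz // xr.
have lr x : x \in leaves (Nd a (Lf z) b r) -> x != z -> x \in leaves r.
  by rewrite /= inE => /orP[->|].
have := restrict_leaves Y r.
rewrite [X in X = _ -> _]/=.
case Er: (restrict Y r) => [[er r']|] Hr; case zY: (z \in Y) => // -[_ <-].
- have [er0 pr'] := restrict_pos pr Er.
  move=> xiY xjY xiT xjT; rewrite !FP_left.
  have [_|xiz] := eqVneq xi z; have [_|xjz] := eqVneq xj z => //.
  + have xjr := lr _ xjT xjz.
    have xjr' : xj \in leaves r' by rewrite Hr xjY.
    rewrite xjr' addr0 => _.
    apply: (le_trans (y := (b + er) + root_dist r' xj)).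
      apply: lerD; first by apply: div_le; [rewrite addr_ge0 // ltW|exact: size_leaves_gt0].
      exact: FP_le_dist.
    by rewrite -addrA (restrict_dist Er) // Hd // Ha.
  + have xir := lr _ xiT xiz.
    rewrite xir => H.
    have : b / (size (leaves r))%:R + FP r xi < a.
      rewrite Ha -(Hd _ xir); apply: ltr_leD; first exact: div_lt.
      exact: FP_le_dist.
    by rewrite ltNge H.
  + have xir := lr _ xiT xiz; have xjr := lr _ xjT xjz.
    rewrite xir xjr lerD2l => H.
    rewrite !Hr xiY xjY xir xjr /= lerD2l.
    exact: (IH _ _ _ _ Er).
- move=> xiY xjY xiT xjT; have xiz : xi != z by apply: contraFneq zY => <-.
  have xjz : xj != z by apply: contraFneq zY => <-.
  have xir := lr _ xiT xiz; have xjr := lr _ xjT xjz.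
  rewrite !FP_left (negbTE xiz) (negbTE xjz) xir xjr lerD2l.
  exact: (IH _ _ _ _ Er).
- by move=> *; rewrite /= lexx.
Qed.

Lemma step_right Y a z b l : Good Y l -> (1 < size (leaves l))%N ->
  z \notin leaves l -> pos_lengths (Nd a l b (Lf z)) ->
  ultrametric (Nd a l b (Lf z)) -> Good Y (Nd a l b (Lf z)).
Proof.
move=> IH l2 zl /and4P[a0 b0 pl _] [c Hc] e Tt xi xj.
have Hb : b = c.
  rewrite -(Hc z); last by rewrite /= mem_cat inE eqxx orbT.
  by rewrite /= (negbTE zl) inE eqxx addr0.
have Hd x : x \in leaves l -> a + root_dist l x = c.
  by move=> xl; rewrite -(Hc x) /= ?mem_cat ?xl.
have lz x : x \in leaves (Nd a l b (Lf z)) -> x \notin leaves l -> x == z.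
  by rewrite /= mem_cat inE => /orP[->|].
have := restrict_leaves Y l.
rewrite [X in X = _ -> _]/=.
case El: (restrict Y l) => [[el l']|] Hl; case zY: (z \in Y) => // -[_ <-].
- have [el0 pl'] := restrict_pos pl El.
  move=> xiY xjY xiT xjT; rewrite !FP_right !Hl xiY xjY /=.
  have [xil|xinl] := boolP (xi \in leaves l); have [xjl|xjnl] := boolP (xj \in leaves l).
  + rewrite !lerD2l; exact: (IH _ _ _ _ El).
  + rewrite (lz _ xjT xjnl) => H.
    have : a / (size (leaves l))%:R + FP l xi < b.
      rewrite Hb -(Hd _ xil); apply: ltr_leD; first exact: div_lt.
      exact: FP_le_dist.
    by rewrite ltNge H.
  + rewrite (lz _ xiT xinl) addr0 => _.
    apply: (le_trans (y := (a + el) + root_dist l' xj)).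
      apply: lerD; first by apply: div_le; [rewrite addr_ge0 // ltW|exact: size_leaves_gt0].
      exact: FP_le_dist.
    by rewrite -addrA (restrict_dist El) // Hd // Hb.
  + by rewrite (lz _ xiT xinl) (lz _ xjT xjnl).
- move=> xiY xjY xiT xjT.
  have xil : xi \in leaves l.
    by apply: contraTT xiY => /(lz _ xiT) /eqP ->; rewrite zY.
  have xjl : xj \in leaves l.
    by apply: contraTT xjY => /(lz _ xjT) /eqP ->; rewrite zY.
  rewrite !FP_right xil xjl lerD2l.
  exact: (IH _ _ _ _ El).
- by move=> *; rewrite /= lexx.
Qed.

Lemma ultra_sub a l b r : uniq (leaves (Nd a l b r)) -> ultrametric (Nd a l b r) ->
  ultrametric l /\ ultrametric r.
Proof.
move=> uq [c Hc]; split.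
  exists (c - a) => x xl; have := Hc x; rewrite /= mem_cat xl /= => /(_ isT) <-.
  by rewrite addrC addKr.
exists (c - b) => x xr; move: uq; rewrite /= cat_uniq => /and3P[_ /hasPn nh _].
have xl := nh x xr.
have := Hc x; rewrite /= mem_cat xr orbT (negbTE xl) => /(_ isT) <-.
by rewrite addrC addKr.
Qed.

Lemma size_Nd a l b r : (1 < size (leaves (Nd a l b r)))%N.
Proof.
rewrite /= size_cat; exact: (leq_add (size_leaves_gt0 l) (size_leaves_gt0 r)).
Qed.

Lemma cherry_good Y a z b w : ultrametric (Nd a (Lf z) b (Lf w)) ->
  Good Y (Nd a (Lf z) b (Lf w)).
Proof.
move=> [c Hc] e Tt xi xj.
have Ha : a = c by rewrite -(Hc z) /= ?inE ?eqxx ?addr0.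
have Hab : w != z -> b = a.
  move=> wz; rewrite Ha -(Hc w); last by rewrite /= !inE eqxx orbT.
  by rewrite /= !inE (negbTE wz) eqxx addr0.
rewrite [X in X = _ -> _]/=.
case zY: (z \in Y); case wY: (w \in Y) => // -[_ <-]; try by move=> *; rewrite /= lexx.
move=> _ _ xiT xjT _.
have F x : x \in [:: z; w] -> FP (Nd (a + 0) (Lf z) (b + 0) (Lf w)) x = a.
  rewrite FP_left !inE /= addr0 => /orP[->//|/eqP ->].
  case: eqP => // /eqP wz; rewrite eqxx addr0 divr1 addr0; exact: Hab.
by rewrite !F // lexx.
Qed.

Lemma good_all Y T : (cherries T <= 1)%N -> uniq (leaves T) -> pos_lengths T ->
  ultrametric T -> Good Y T.
Proof.
elim: T => [y|a l IHl b r IHr] ch uq pT uT.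
  move=> e Tt xi xj /=; case: ifP => // _ [_ <-] *; by rewrite /= lexx.
have [ul ur] := ultra_sub uq uT.
move: (uq) => /=; rewrite cat_uniq => /and3P[uql _ uqr].
move: (pT) => /= /and4P[_ _ pl pr].
case: l IHl ch uq pT uT ul uql pl => [z|a1 l1 b1 r1] IHl;
  case: r IHr ur uqr pr => [w|a2 l2 b2 r2] IHr ur uqr pr ch uq pT uT ul uql pl.
- exact: cherry_good.
- apply: step_left => //.
  + by apply: IHr.
  + exact: size_Nd.
- apply: step_right => //.
  + by apply: IHl => //; move: ch; change (cherries (Nd a (Nd a1 l1 b1 r1) b (Lf w))) with (cherries (Nd a1 l1 b1 r1) + 0)%N; rewrite addn0.
  + exact: size_Nd.
  + move: uq; rewrite [leaves _]/= cat_uniq => /and3P[_ /hasPn H _].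
    exact: (H w (mem_head _ _)).
- move: ch; change (cherries (Nd a (Nd a1 l1 b1 r1) b (Nd a2 l2 b2 r2))) with
    (cherries (Nd a1 l1 b1 r1) + cherries (Nd a2 l2 b2 r2))%N => ch.
  have h1 := cherries_Nd a1 l1 b1 r1; have h2 := cherries_Nd a2 l2 b2 r2.
  by have := leq_trans (leq_add h1 h2) ch.
Qed.

End M.

End Aux.
Import Aux.

Theorem proposition1 (R : realFieldType) (X : finType) (T : btree R X)
  (X' : {set X}) (Tt : btree R X) (xi xj : X) :
  phylo_X_tree T -> pos_lengths T -> ultrametric T -> caterpillar T ->
  (3 <= #|X|)%N ->
  induced (~: X') T = Some Tt ->
  xi \in ~: X' -> xj \in ~: X' ->
  FP T xi >= FP T xj -> FP Tt xi >= FP Tt xj.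
Proof.
move=> ph pT uT cT _ ind xiY xjY H.
have uq : uniq (leaves T) by rewrite (perm_uniq ph) enum_uniq.
have mem x : x \in leaves T by rewrite (perm_mem ph) mem_enum.
move: ind; rewrite /induced.
case E: (restrict (~: X') T) => [[e T']|] //= [<-].
have ch : (cherries T <= 1)%N by rewrite /caterpillar in cT; rewrite cT.
exact: (@good_all R X (~: X') T ch uq pT uT _ _ _ _ E xiY xjY (mem xi) (mem xj) H).
Qed.
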